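(* Fix $c\in\mathcal{C}'$ with $\mathcal{S}(c)\setminus\{c\}\neq\emptyset$ and fix the values of all messages other than the block $\boldsymbol\lambda_{c,\mathcal{S}(c)}=(\lambda_{c\to s}(\mathbf{x}_s))_{s\in\mathcal{S}(c)\setminus\{c\}}$. For an arbitrary choice of this block, let $(b_c,(b_s)_{s\in\mathcal{S}(c)\setminus\{c\}})$ be the resulting beliefs, and let $(b^*_c,(b^*_s)_{s\in\mathcal{S}(c)\setminus\{c\}})$ be the beliefs obtained when the block is replaced by $\boldsymbol\lambda^*_{c,\mathcal{S}(c)}$. Then $$b^*_s(\mathbf{x}_s)=\frac{1}{|\mathcal{S}(c)\setminus\{c\}|}\max_{\mathbf{x}_{c\setminus s}}\Big[b_c(\mathbf{x}_c)+\sum_{\hat s\in\mathcal{S}(c)\setminus\{c\}}b_{\hat s}(\mathbf{x}_{\hat s})\Big]\quad\forall s\in\mathcal{S}(c)\setminus\{c\},\ \mathbf{x}_s,$$ $$b^*_c(\mathbf{x}_c)=b_c(\mathbf{x}_c)+\sum_{\hat s\in\mathcal{S}(c)\setminus\{c\}}b_{\hat s}(\mathbf{x}_{\hat s})-\sum_{\hat s\in\mathcal{S}(c)\setminus\{c\}}b^*_{\hat s}(\mathbf{x}_{\hat s})\quad\forall\mathbf{x}_c.$$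
   Context: Let $\mathcal{V}=\{1,\dots,n\}$; each variable $x_i$ takes values in a finite set, $\mathbf{x}_s=(x_i)_{i\in s}$ for $s\subseteq\mathcal{V}$. Let $\mathcal{C}$ be a collection of subsets of $\mathcal{V}$ with real potentials $\theta_c(\mathbf{x}_c)$. Let $\mathcal{C}'$ be a collection of subsets of $\mathcal{V}$ and for each $c\in\mathcal{C}'$ let $\mathcal{S}(c)$ be a collection of subsets of $c$ (possibly containing $c$), with $\mathcal{C}'\cup\bigcup_c\mathcal{S}(c)\supseteq\mathcal{C}$; put $\mathcal{T}=\mathcal{C}'\cup\bigcup_{c\in\mathcal{C}'}\mathcal{S}(c)$. Messages are reals $\lambda_{c\to s}(\mathbf{x}_s)$, $c\in\mathcal{C}'$, $s\in\mathcal{S}(c)\setminus\{c\}$. For $t\in\mathcal{T}$: $\hat\theta_t=\mathbb{1}(t\in\mathcal{C})\theta_t$; $\gamma_t(\mathbf{x}_t)=\mathbb{1}(t\in\mathcal{C}')\sum_{\hat s\in\mathcal{S}(t)\setminus\{t\}}\lambda_{t\to\hat s}(\mathbf{x}_{\hat s})$; $\lambda_t(\mathbf{x}_t)=\sum_{c'\in\mathcal{C}':\,t\in\mathcal{S}(c')\setminus\{c'\}}\lambda_{c'\to t}(\mathbf{x}_t)$; beliefs $b_t=\hat\theta_t+\lambda_t-\gamma_t$. For $s\in\mathcal{S}(c)\setminus\{c\}$, $\lambda_s^{-c}(\mathbf{x}_s)=\sum_{\hat c\in\mathcal{C}':\,\hat c\ne c,\ s\in\mathcal{S}(\hat c)\setminus\{\hat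 c\}}\lambda_{\hat c\to s}(\mathbf{x}_s)$ (these and $\lambda_c,\gamma_s$ do not depend on the block). The updated block is $\lambda^*_{c\to s}(\mathbf{x}_s)=-\hat\theta_s(\mathbf{x}_s)+\gamma_s(\mathbf{x}_s)-\lambda_s^{-c}(\mathbf{x}_s)+\frac{1}{|\mathcal{S}(c)\setminus\{c\}|}\max_{\mathbf{x}_{c\setminus s}}[\hat\theta_c(\mathbf{x}_c)+\lambda_c(\mathbf{x}_c)+\sum_{\hat s\in\mathcal{S}(c)\setminus\{c\}}(\hat\theta_{\hat s}-\gamma_{\hat s}+\lambda^{-c}_{\hat s})(\mathbf{x}_{\hat s})]$. *)

(* Defs.v *)
From HB Require Import structures.
From mathcomp Require Import all_boot all_order all_algebra.
Set Implicit Arguments. Unset Strict Implicit. Unset Printing Implicit Defensive.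
Import Order.TTheory GRing.Theory Num.Theory.
Local Open Scope ring_scope.

(* Variables are 'I_n; variable i takes values in the finite type D i.
   A function of x_s is represented as a function of full assignments
   that only depends on the coordinates in s (see [depends_only]). *)
Definition assign (n : nat) (D : 'I_n -> finType) := {dffun forall i : 'I_n, D i}.

Section Defs.
Variables (R : realFieldType) (n : nat) (D : 'I_n -> finType).
Local Notation A := (assign D).
Variables (C C' : {set {set 'I_n}}) (S : {set 'I_n} -> {set {set 'I_n}}).
Variable theta : {set 'I_n} -> A -> R.
(* lam c s x = lambda_{c -> s}(x_s) *)
Variable lam : {set 'I_n} -> {set 'I_n} -> A -> R.

Definition depends_only (s : {set 'I_n}) (f : A -> R) :=
  forall x y : A, (forall i, i \in s -> x i = y i) -> f x = f y.

(* max over x_{c \ s} of F, the other coordinates being those of x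
   (the set of such y is nonempty: it contains x). *)
Definition max_over (c s : {set 'I_n}) (F : A -> R) (x : A) : R :=
  \big[Num.max/F x]_(y : A | [forall i, (i \notin c :\: s) ==> (y i == x i)]) F y.

Definition thetahat (t : {set 'I_n}) (x : A) : R :=
  if t \in C then theta t x else 0.

Definition gamma (t : {set 'I_n}) (x : A) : R :=
  if t \in C' then \sum_(sh in S t :\ t) lam t sh x else 0.

Definition lam_in (t : {set 'I_n}) (x : A) : R :=
  \sum_(c' in C' | t \in S c' :\ c') lam c' t x.

Definition belief (t : {set 'I_n}) (x : A) : R :=
  thetahat t x + lam_in t x - gamma t x.

Definition lam_minus (c s : {set 'I_n}) (x : A) : R :=
  \sum_(ch in C' | (ch != c) && (s \in S ch :\ ch)) lam ch s x.

Definition lam_star (c s : {set 'I_n}) (x : A) : R :=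
  - thetahat s x + gamma s x - lam_minus c s x
  + (#|S c :\ c|%:R)^-1 *
    max_over c s (fun y => thetahat c y + lam_in c y
       + \sum_(sh in S c :\ c) (thetahat sh y - gamma sh y + lam_minus c sh y)) x.

End Defs.

Definition replace_block (n : nat) (T : Type) (S : {set 'I_n} -> {set {set 'I_n}})
  (lam : {set 'I_n} -> {set 'I_n} -> T) (c : {set 'I_n}) (blk : {set 'I_n} -> T) :=
  fun c' s => if (c' == c) && (s \in S c :\ c) then blk s else lam c' s.

(* Main.v *)
Require Import Defs.
From HB Require Import structures.
From mathcomp Require Import all_boot all_order all_algebra ring.
Import Order.TTheory GRing.Theory Num.Theory.
Local Open Scope ring_scope.

Theorem proposition6 (R : realFieldType) (n : nat) (D : 'I_n -> finType)
  (C C' : {set {set 'I_n}}) (S : {set 'I_n} -> {set {set 'I_n}})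
  (theta : {set 'I_n} -> assign D -> R)
  (lam : {set 'I_n} -> {set 'I_n} -> assign D -> R)
  (c : {set 'I_n}) :
  (forall c0, c0 \in C' -> forall s, s \in S c0 -> s \subset c0) ->
  C \subset C' :|: \bigcup_(c0 in C') S c0 ->
  (forall t, t \in C -> depends_only t (theta t)) ->
  (forall c0, c0 \in C' -> forall s, s \in S c0 :\ c0 -> depends_only s (lam c0 s)) ->
  c \in C' ->
  S c :\ c != set0 ->
  let lam' := replace_block S lam c (lam_star C C' S theta lam c) in
  let b := belief C C' S theta lam in
  let b' := belief C C' S theta lam' in
  (forall s, s \in S c :\ c -> forall x : assign D,
     b' s x = (#|S c :\ c|%:R)^-1 *
       max_over c s (fun y => b c y + \sum_(sh in S c :\ c) b sh y) x) /\
  (forall x : assign D,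
     b' c x = b c x + \sum_(sh in S c :\ c) b sh x - \sum_(sh in S c :\ c) b' sh x).
Proof.
move=> _ _ _ _ cC' _ lam' b b'.
set K := S c :\ c.
have sNc : forall s, s \in K -> s != c.
  by move=> s; rewrite in_setD1 => /andP[].
have cK : c \notin K by rewrite in_setD1 eqxx.
have split_in : forall (L : {set 'I_n} -> {set 'I_n} -> assign D -> R) s (x : assign D), s \in K ->
    lam_in C' S L s x = L c s x + lam_minus C' S L c s x.
  move=> L s x sK; rewrite /lam_in (bigD1 c) /=; last by rewrite cC'.
  congr (_ + _); rewrite /lam_minus; apply: eq_bigl => ch.
  by case: (ch \in C'); case: (ch != c); case: (s \in S ch :\ ch).
have lmE : forall s x, lam_minus C' S lam' c s x = lam_minus C' S lam c s x.
  move=> s x; rewrite /lam_minus; apply: eq_bigr => ch /andP[_ /andP[nc _]].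
  by rewrite /lam' /replace_block (negbTE nc).
have l'cs : forall s x, s \in K -> lam' c s x = lam_star C C' S theta lam c s x.
  by move=> s x sK; rewrite /lam' /replace_block eqxx sK.
have gE : forall s x, s \in K -> gamma C' S lam' s x = gamma C' S lam s x.
  move=> s x sK; rewrite /gamma; case: (s \in C') => //.
  apply: eq_bigr => sh _; by rewrite /lam' /replace_block (negbTE (sNc s sK)).
have gc : forall x, gamma C' S lam' c x = \sum_(sh in K) lam_star C C' S theta lam c sh x.
  move=> x; rewrite /gamma cC'; apply: eq_bigr => sh shK; exact: l'cs.
have gc0 : forall x, gamma C' S lam c x = \sum_(sh in K) lam c sh x.
  by move=> x; rewrite /gamma cC'.
have lic : forall x, lam_in C' S lam' c x = lam_in C' S lam c x.
  move=> x; rewrite /lam_in; apply: eq_bigr => c' _.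
  by rewrite /lam' /replace_block (negbTE cK) andbF.
set F := (fun y => thetahat C theta c y + lam_in C' S lam c y
       + \sum_(sh in K) (thetahat C theta sh y - gamma C' S lam sh y + lam_minus C' S lam c sh y)).
have FE : forall y, F y = b c y + \sum_(sh in K) b sh y.
  move=> y; rewrite /F /b /belief gc0.
  have -> : \sum_(sh in K) (thetahat C theta sh y + lam_in C' S lam sh y - gamma C' S lam sh y)
     = \sum_(sh in K) (thetahat C theta sh y - gamma C' S lam sh y + lam_minus C' S lam c sh y)
       + \sum_(sh in K) lam c sh y.
    rewrite -big_split /=; apply: eq_bigr => sh shK; rewrite split_in //.
    by ring.
  by ring.
have b's : forall s x, s \in K -> b' s x = (#|K|%:R)^-1 * max_over c s F x.
  move=> s x sK; rewrite /b' /belief split_in // lmE gE // l'cs // /lam_star.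
  rewrite -/K -/F.
  ring.
split.
  move=> s sK x; rewrite b's //; congr (_ * _).
  rewrite /max_over FE; apply: eq_bigr => y _; exact: FE.
move=> x.
have -> : \sum_(sh in K) b' sh x = \sum_(sh in K)
   (thetahat C theta sh x + lam_star C C' S theta lam c sh x + lam_minus C' S lam c sh x
      - gamma C' S lam sh x).
  apply: eq_bigr => sh shK.
  by rewrite /b' /belief split_in // lmE gE // l'cs // addrA.
rewrite -FE /F /b' /belief lic gc.
rewrite !big_split /= !sumrN.
ring.
Qed.
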